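(* Let $G$ be a group and let $V$ be a finite-dimensional vector space. Suppose that $\tau\in\mathrm{LNUCA}_c(G,V)$ is left-invertible. Then $\tau$ is stably injective.
   Context: For $g\in G$ and $x\in V^G$, $(gx)(h)=x(g^{-1}h)$. For $M\subset G$, a set $S$ of maps $V^M\to V$ and $s\in S^G$, the NUCA $\sigma_s\colon V^G\to V^G$ is $\sigma_s(x)(g)=s(g)((g^{-1}x)\vert_M)$; it has finite memory if $M$ is finite. $\mathrm{LNUCA}_c(G,V)$ is the set of $\sigma_s$ with $M$ finite, $s\in\mathcal{L}(V^M,V)^G$ constant outside some finite subset of $G$. $\tau$ is left-invertible if there is a NUCA $\sigma\colon V^G\to V^G$ with finite memory such that $\sigma\circ\tau=\mathrm{Id}$. For $s\in S^G$, $\Sigma(s)$ is the closure of $\{gs:g\in G\}$ in $S^G$ (prodiscrete topology); $\tau=\sigma_s$ is stably injective if $\sigma_p$ is injective for every $p\in\Sigma(s)$. *)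

(* Defs.v *)
From Stdlib Require List.
From mathcomp Require Import all_boot all_algebra.
Set Implicit Arguments.
Unset Strict Implicit.
Unset Printing Implicit Defensive.
Import GRing.Theory.
Local Open Scope ring_scope.

Record group_law (G : Type) := GroupLaw {
  gmul : G -> G -> G;
  gone : G;
  ginv : G -> G;
  gmulA : forall a b c, gmul a (gmul b c) = gmul (gmul a b) c;
  gmul1 : forall a, gmul gone a = a;
  gmulV : forall a, gmul (ginv a) a = gone }.

Section NUCA.
Variables (G : Type) (GL : group_law G).

Definition finite_subset (M : G -> Prop) : Prop :=
  exists l : list G, forall g, M g -> List.In g l.

Definition shift (T : Type) (g : G) (x : G -> T) : G -> T :=
  fun h => x (gmul GL (ginv GL g) h).

(* The NUCA sigma_s : V^G -> V^G with memory M and local rules s : G -> S,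
   S a set of maps V^M -> V:  sigma_s(x)(g) = s(g)((g^{-1} x)|_M). *)
Definition nuca (V : Type) (M : G -> Prop) (s : G -> ((sig M -> V) -> V))
  (x : G -> V) : G -> V :=
  fun g => s g (fun m : sig M => shift (ginv GL g) x (proj1_sig m)).

(* Sigma(s): p lies in the closure of the orbit {g s : g in G} for the
   prodiscrete topology, i.e. every finite window of p agrees with some g s. *)
Definition in_orbit_closure (T : Type) (s p : G -> T) : Prop :=
  forall E : G -> Prop, finite_subset E ->
    exists g : G, forall h, E h -> p h = shift g s h.

Definition asympt_const (T : Type) (s : G -> T) : Prop :=
  exists F : G -> Prop, finite_subset F /\
    exists t0 : T, forall g, ~ F g -> s g = t0.

Definition nuca_left_invertible (V : Type) (tau : (G -> V) -> (G -> V)) : Prop :=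
  exists N : G -> Prop, finite_subset N /\
    exists t : G -> ((sig N -> V) -> V), forall x, @nuca V N t (tau x) = x.

Definition stably_injective (V : Type) (M : G -> Prop)
  (S : ((sig M -> V) -> V) -> Prop) (s : G -> ((sig M -> V) -> V)) : Prop :=
  forall p : G -> ((sig M -> V) -> V),
    (forall g, S (p g)) -> in_orbit_closure s p -> injective (@nuca V M p).

End NUCA.

Arguments nuca {G} GL {V} M s x _.

Definition local_linear (K : fieldType) (V : vectType K) (I : Type)
  (f : (I -> V) -> V) : Prop :=
  forall (a : K) (x y : I -> V), f (fun i => a *: x i + y i) = a *: f x + f y.

(* Main.v *)
Require Import Defs.
From mathcomp Require Import all_boot all_algebra.
From Stdlib Require Import FunctionalExtensionality.
Import GRing.Theory.
Local Open Scope ring_scope.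

Section Grp.
Variables (G : Type) (GL : group_law G).

Lemma gmulVr a : gmul GL a (ginv GL a) = gone GL.
Proof.
set b := ginv GL a.
rewrite -[gmul GL a b](gmul1 GL) -{1}(gmulV GL b).
rewrite -gmulA (gmulA GL b a b) (gmulV GL a) (gmul1 GL).
exact: gmulV.
Qed.

Lemma gmulr1 a : gmul GL a (gone GL) = a.
Proof. by rewrite -(gmulV GL a) gmulA gmulVr gmul1. Qed.

Lemma ginvK a : ginv GL (ginv GL a) = a.
Proof. by rewrite -[LHS]gmulr1 -(gmulV GL a) gmulA gmulV gmul1. Qed.
End Grp.

Theorem theorem4p3 (G : Type) (GL : group_law G) (K : fieldType) (V : vectType K)
  (M : G -> Prop) (s : G -> ((sig M -> V) -> V)) :
  finite_subset M ->
  (forall g, local_linear (s g)) ->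
  asympt_const s ->
  nuca_left_invertible GL (nuca GL M s) ->
  stably_injective GL (fun f => local_linear f) s.
Proof.
move=> _ slin _ [N [[l Hl] [t Ht]]] p plin pcl.
have lin0 : forall I (f : (I -> V) -> V), local_linear f -> f (fun _ => 0) = 0.
  move=> I f fl; have := fl (-1) (fun _ => 0) (fun _ => 0).
  have -> : (fun _ : I => (-1) *: (0:V) + 0) = (fun _ => 0).
    by apply: functional_extensionality => i; rewrite scaler0 addr0.
  by rewrite scaleN1r addNr.
suff ker : forall z, (forall g, nuca GL M p z g = 0) -> forall h, z h = 0.
  move=> x y Hxy; apply: functional_extensionality => h.
  have := ker (fun q => (-1) *: y q + x q).
  move=> /(_ _ h) H; apply/eqP; rewrite -subr_eq0 addrC -scaleN1r; apply/eqP; apply: H.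
  move=> g; rewrite /nuca /shift /= (plin g (-1)).
  have := congr1 (fun f => f g) Hxy; rewrite /nuca /shift /= => ->.
  by rewrite scaleN1r addNr.
move=> z Hz h.
pose E := fun h' => exists m : sig N, h' = gmul GL h (proj1_sig m).
have fE : finite_subset E.
  exists (List.map (gmul GL h) l) => h' [m ->]; apply: List.in_map; apply: Hl.
  exact: proj2_sig m.
have [k Hk] := pcl E fE.
pose y := fun q => z (gmul GL k q).
pose q := gmul GL (ginv GL k) h.
have Hy : forall m : sig N, nuca GL M s y (gmul GL (ginv GL (ginv GL q)) (proj1_sig m)) = 0.
  move=> m; rewrite ginvK /nuca.
  have eq1 : gmul GL q (proj1_sig m) = gmul GL (ginv GL k) (gmul GL h (proj1_sig m)).
    by rewrite /q gmulA.
  rewrite eq1.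
  have -> : s (gmul GL (ginv GL k) (gmul GL h (proj1_sig m))) = p (gmul GL h (proj1_sig m)).
    by rewrite (Hk _ (ex_intro _ m erefl)).
  rewrite -(Hz (gmul GL h (proj1_sig m))) /nuca /shift /y.
  congr (p _ _); apply: functional_extensionality => m'.
  by rewrite !ginvK !gmulA gmulVr gmul1.
have Hz0 : forall m : sig N, nuca GL M s (fun _ => 0) (gmul GL (ginv GL (ginv GL q)) (proj1_sig m)) = 0.
  by move=> m; rewrite /nuca /shift lin0.
have e1 := congr1 (fun f => f q) (Ht y).
have e0 := congr1 (fun f => f q) (Ht (fun _ => 0)).
rewrite /= /nuca /shift in e1 e0.
have -> : z h = y q by rewrite /y /q gmulA gmulVr gmul1.
rewrite -e1 -e0; congr (t q _); apply: functional_extensionality => m.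
by move: (Hy m) (Hz0 m); rewrite /nuca /shift => -> ->.
Qed.
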